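(* Let $H$ be a complex Hilbert space and $\mathcal S(H)$ the set of bounded self-adjoint operators on $H$ with the logical order $\preceq$. For every pair $A,B \in \mathcal S(H)$, the set $\{P_C : C \in \mathcal S(H),\ C \preceq A \text{ and } C \preceq B\}$ has a maximum element (with respect to the usual order of projections), the meet $A \curlywedge B$ of $A$ and $B$ in $(\mathcal S(H),\preceq)$ exists, and \[ A \curlywedge B = B\big(\max\{P_C : C \preceq A \text{ and } C \preceq B\}\big). \]
   Context: For $C \in \mathcal S(H)$, $P_C$ denotes the orthogonal projection onto the closure of the range of $C$; projections are ordered by $P_1 \le P_2$ iff $P_1P_2 = P_1$. The logical order: $A \preceq B$ iff $B = A + D$ for some $D \in \mathcal S(H)$ with $AD = O$; equivalently $A = BP_A$. Juxtaposition denotes operator composition. *)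

(* Defs.v *)
From HB Require Import structures.
From mathcomp Require Import all_boot all_order all_algebra.
From mathcomp Require Import reals.
From mathcomp Require Import complex.
Set Implicit Arguments. Unset Strict Implicit. Unset Printing Implicit Defensive.
Import Order.TTheory GRing.Theory Num.Theory.
Local Open Scope ring_scope.
Local Open Scope complex_scope.

Section Hilbert.
Variables (R : realType) (V : lmodType R[i]) (ip : V -> V -> R[i]).

Definition hnorm (x : V) : R := Num.sqrt (complex.Re (ip x x)).

Definition is_hilbert : Prop :=
  [/\ (forall (a : R[i]) (x y z : V), ip (a *: x + y) z = a * ip x z + ip y z),
      (forall x y : V, ip x y = (ip y x)^*),
      (forall x : V, 0 <= ip x x),
      (forall x : V, ip x x = 0 -> x = 0) &
      (forall u : nat -> V,
         (forall e : R, 0 < e -> exists N : nat, forall m n : nat,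
             (N <= m)%N -> (N <= n)%N -> hnorm (u m - u n) < e) ->
         exists l : V, forall e : R, 0 < e -> exists N : nat, forall n : nat,
             (N <= n)%N -> hnorm (u n - l) < e)].

Definition bounded_op (A : V -> V) : Prop :=
  (forall (a : R[i]) (x y : V), A (a *: x + y) = a *: A x + A y) /\
  (exists M : R, forall x : V, hnorm (A x) <= M * hnorm x).

Definition selfadj (A : V -> V) : Prop :=
  bounded_op A /\ (forall x y : V, ip (A x) y = ip x (A y)).

Definition logle (A B : V -> V) : Prop :=
  exists D : V -> V, [/\ selfadj D, (forall x, B x = A x + D x)
                                  & (forall x, A (D x) = 0)].

Definition in_closure_range (C : V -> V) (y : V) : Prop :=
  forall e : R, 0 < e -> exists x : V, hnorm (y - C x) < e.

Definition is_range_proj (C P : V -> V) : Prop :=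
  [/\ selfadj P, (forall x, P (P x) = P x)
    & (forall y, (exists x, y = P x) <-> in_closure_range C y)].

Definition proj_le (P1 P2 : V -> V) : Prop := forall x, P1 (P2 x) = P1 x.

Definition is_logmeet (A B X : V -> V) : Prop :=
  [/\ selfadj X, logle X A, logle X B &
      (forall Y, selfadj Y -> logle Y A -> logle Y B -> logle Y X)].

End Hilbert.

(* Main.v *)
Require Import Defs.
From HB Require Import structures.
From mathcomp Require Import all_boot all_order all_algebra.
From mathcomp Require Import classical_sets.
From mathcomp Require Import lra ring.
From mathcomp Require Import reals complex.
From Stdlib Require Import ClassicalEpsilon FunctionalExtensionality.
Import Order.TTheory GRing.Theory Num.Theory.
Local Open Scope ring_scope.
Local Open Scope complex_scope.

Section Basics.
Variables (R : realType) (V : lmodType R[i]) (ip : V -> V -> R[i]).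
Hypothesis hH : is_hilbert ip.

Lemma ipL (a : R[i]) x y z : ip (a *: x + y) z = a * ip x z + ip y z.
Proof. by case: hH => h _ _ _ _; exact: h. Qed.
Lemma ipC x y : ip x y = (ip y x)^*.
Proof. by case: hH => _ h _ _ _; exact: h. Qed.
Lemma ipP x : 0 <= ip x x.
Proof. by case: hH => _ _ h _ _; exact: h. Qed.
Lemma ipD x : ip x x = 0 -> x = 0.
Proof. by case: hH => _ _ _ h _; exact: h. Qed.

Lemma ip0l z : ip 0 z = 0.
Proof.
have := ipL 1 0 0 z; rewrite scaler0 addr0 mul1r => h.
by apply: (@addrI _ (ip 0 z)); rewrite addr0 -h.
Qed.
Lemma ipDl x y z : ip (x + y) z = ip x z + ip y z.
Proof. by have := ipL 1 x y z; rewrite scale1r mul1r. Qed.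
Lemma ipZl a x z : ip (a *: x) z = a * ip x z.
Proof. by rewrite -[a *: x]addr0 ipL ip0l addr0. Qed.
Lemma ipNl x z : ip (- x) z = - ip x z.
Proof. by rewrite -scaleN1r ipZl mulN1r. Qed.
Lemma ipBl x y z : ip (x - y) z = ip x z - ip y z.
Proof. by rewrite ipDl ipNl. Qed.
Lemma ip0r z : ip z 0 = 0.
Proof. by rewrite ipC ip0l conjc0. Qed.
Lemma ipDr x y z : ip z (x + y) = ip z x + ip z y.
Proof. by rewrite (ipC z x) (ipC z y) (ipC z (x+y)) ipDl rmorphD. Qed.
Lemma ipZr a x z : ip z (a *: x) = a^* * ip z x.
Proof. by rewrite (ipC z x) (ipC z (a *: x)) ipZl rmorphM. Qed.
Lemma ipNr x z : ip z (- x) = - ip z x.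
Proof. by rewrite (ipC z x) (ipC z (- x)) ipNl rmorphN. Qed.
Lemma ipBr x y z : ip z (x - y) = ip z x - ip z y.
Proof. by rewrite ipDr ipNr. Qed.

Definition q (v : V) : R := complex.Re (ip v v).
Lemma ipvv v : ip v v = (q v)%:C.
Proof.
rewrite /q; have := ipP v; case: (ip v v) => a b.
by rewrite lecE /= => /andP [/eqP -> _].
Qed.
Lemma q_ge0 v : 0 <= q v.
Proof. by have := ipP v; rewrite ipvv ler0c. Qed.
Lemma q_eq0 v : q v = 0 -> v = 0.
Proof. by move=> h; apply: ipD; rewrite ipvv h. Qed.
Lemma hnormE v : hnorm ip v = Num.sqrt (q v).
Proof. by []. Qed.

Lemma ip_eq u v : (forall w, ip u w = ip v w) -> u = v.
Proof.
move=> h; apply/eqP; rewrite -subr_eq0; apply/eqP/ipD.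
by rewrite ipBl h subrr.
Qed.
Lemma ip_eq0 u : (forall w, ip u w = 0) -> u = 0.
Proof. by move=> h; apply: ipD. Qed.


Lemma ReD (u v : R[i]) : complex.Re (u + v) = complex.Re u + complex.Re v.
Proof. by case: u v => [a b] [c d]. Qed.
Lemma ReN (u : R[i]) : complex.Re (- u) = - complex.Re u.
Proof. by case: u. Qed.
Lemma ReJ (u : R[i]) : complex.Re (u^*) = complex.Re u.
Proof. by case: u. Qed.
Lemma ReMr (s : R) (u : R[i]) : complex.Re (s%:C * u) = s * complex.Re u.
Proof. by case: u => a b /=; rewrite mul0r subr0. Qed.
Lemma Re0 : complex.Re (0 : R[i]) = 0.
Proof. by []. Qed.

Lemma qD x y : q (x + y) = q x + q y + 2 * complex.Re (ip x y).
Proof.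
rewrite /q ipDl !ipDr (ipC y x) !ReD ReJ; lra.
Qed.
Lemma qN x : q (- x) = q x.
Proof. by rewrite /q ipNl ipNr opprK. Qed.
Lemma ReipZl (s : R) x y : complex.Re (ip (s%:C *: x) y) = s * complex.Re (ip x y).
Proof. by rewrite ipZl ReMr. Qed.
Lemma ReipZr (s : R) x y : complex.Re (ip x (s%:C *: y)) = s * complex.Re (ip x y).
Proof. by rewrite ipZr; case: (ip x y) => a b /=; rewrite oppr0 mul0r subr0. Qed.
Lemma qZ (s : R) x : q (s%:C *: x) = s ^+ 2 * q x.
Proof. by rewrite /q ReipZl ReipZr expr2 mulrA. Qed.
Lemma ReipN x y : complex.Re (ip x (- y)) = - complex.Re (ip x y).
Proof. by rewrite ipNr ReN. Qed.

Lemma q0 : q 0 = 0.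
Proof. by rewrite /q ip0l. Qed.

Lemma CS x y : complex.Re (ip x y) ^+ 2 <= q x * q y.
Proof.
have [/q_eq0 ->|qy] := eqVneq (q y) 0.
  by rewrite ip0r Re0 q0 expr0n /= mulr0.
have qy0 : 0 < q y by rewrite lt0r qy q_ge0.
set r := complex.Re (ip x y).
have := q_ge0 ((q y)%:C *: x - r%:C *: y).
rewrite qD qN !qZ ReipN ReipZl ReipZr -/r => h.
have h2 : 0 <= q y * (q x * q y - r ^+ 2) by nra.
rewrite -subr_ge0; move: h2; rewrite pmulr_rge0 //.
Qed.

Lemma hnorm_ge0 v : 0 <= hnorm ip v.
Proof. exact: sqrtr_ge0. Qed.

Lemma sqr_hnorm v : hnorm ip v ^+ 2 = q v.
Proof. by rewrite hnormE sqr_sqrtr // q_ge0. Qed.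

Lemma Re_ip_le x y : complex.Re (ip x y) <= hnorm ip x * hnorm ip y.
Proof.
rewrite !hnormE -sqrtrM ?q_ge0 //.
apply: (le_trans (ler_norm _)); rewrite -sqrtr_sqr ler_sqrt ?CS //.
by rewrite mulr_ge0 ?q_ge0.
Qed.

Lemma hnorm_triangle x y : hnorm ip (x + y) <= hnorm ip x + hnorm ip y.
Proof.
have h := Re_ip_le x y.
have key : q (x + y) <= (hnorm ip x + hnorm ip y) ^+ 2.
  rewrite qD sqrrD !sqr_hnorm; lra.
have s0 : 0 <= hnorm ip x + hnorm ip y by rewrite addr_ge0 // hnorm_ge0.
rewrite hnormE -(ger0_norm s0) -sqrtr_sqr ler_sqrt //.
exact: sqr_ge0.
Qed.

Lemma hnormN v : hnorm ip (- v) = hnorm ip v.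
Proof. by rewrite !hnormE qN. Qed.

Lemma hnorm_eq0 v : hnorm ip v = 0 -> v = 0.
Proof.
move=> h; apply: q_eq0; apply/eqP; rewrite eq_le q_ge0 andbT.
by move/eqP: h; rewrite hnormE sqrtr_eq0.
Qed.

Lemma hnorm_lt v e : 0 < e -> (hnorm ip v < e) = (q v < e ^+ 2).
Proof.
move=> e0; by rewrite hnormE -{1}(gtr0_norm e0) -sqrtr_sqr ltr_sqrt // exprn_gt0.
Qed.

Lemma hnorm0 : hnorm ip 0 = 0.
Proof. by rewrite hnormE /q ip0l Re0 sqrtr0. Qed.


Lemma invn_le (N m : nat) : (N <= m)%N -> (m.+1%:R : R)^-1 <= (N.+1%:R)^-1.
Proof. by move=> h; rewrite lef_pV2 ?posrE ?ltr0Sn // ler_nat. Qed.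

Lemma invn_small (e : R) : 0 < e -> exists N : nat, forall m, (N <= m)%N -> (m.+1%:R : R)^-1 < e.
Proof.
move=> e0; have h0 : 0 <= e^-1 by rewrite invr_ge0 ltW.
have hN := archi_boundP h0.
exists (Num.Def.archi_bound e^-1) => m hm.
apply: le_lt_trans (invn_le _ _ hm) _.
rewrite -[e]invrK ltf_pV2 ?posrE ?invr_gt0 ?ltr0Sn //.
apply: lt_le_trans hN _; by rewrite ler_nat invrK leqnSn.
Qed.

Lemma qZc (c : R[i]) v : q (c *: v) = (complex.Re c ^+ 2 + complex.Im c ^+ 2) * q v.
Proof.
rewrite /q ipZl ipZr ipvv; case: c => a b /=; ring.
Qed.

Lemma complete (u : nat -> V) :
  (forall e : R, 0 < e -> exists N : nat, forall m n : nat,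
      (N <= m)%N -> (N <= n)%N -> hnorm ip (u m - u n) < e) ->
  exists l : V, forall e : R, 0 < e -> exists N : nat, forall n : nat,
      (N <= n)%N -> hnorm ip (u n - l) < e.
Proof. by case: hH => _ _ _ _ h; exact: h. Qed.

Definition closed_sub (S : V -> Prop) :=
  [/\ S 0, (forall a x y, S x -> S y -> S (a *: x + y)) &
      (forall y, (forall e : R, 0 < e -> exists s, S s /\ hnorm ip (y - s) < e) -> S y)].

Lemma parallelogram a b : q (a + b) + q (a - b) = 2 * q a + 2 * q b.
Proof. rewrite !qD qN ReipN; lra. Qed.

Section Ops.
Implicit Types f g : V -> V.

Definition lin f := forall a x y, f (a *: x + y) = a *: f x + f y.

Lemma lin0 {f} : lin f -> f 0 = 0.
Proof.
move=> hf; have := hf 1 0 0; rewrite scaler0 addr0 scale1r => h.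
by apply: (@addrI _ (f 0)); rewrite addr0 -h.
Qed.
Lemma linD {f} : lin f -> forall x y, f (x + y) = f x + f y.
Proof. by move=> hf x y; have := hf 1 x y; rewrite !scale1r. Qed.
Lemma linZ {f} : lin f -> forall a x, f (a *: x) = a *: f x.
Proof. by move=> hf a x; have := hf a x 0; rewrite !addr0 lin0 // addr0. Qed.
Lemma linN {f} : lin f -> forall x, f (- x) = - f x.
Proof. by move=> hf x; rewrite -scaleN1r linZ // scaleN1r. Qed.
Lemma linB {f} : lin f -> forall x y, f (x - y) = f x - f y.
Proof. by move=> hf x y; rewrite linD // linN. Qed.

Lemma bnd_lin {f} : bounded_op ip f -> lin f.
Proof. by case. Qed.
Lemma sa_lin {f} : selfadj ip f -> lin f.
Proof. by case=> [[]]. Qed.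
Lemma sa_bnd {f} : selfadj ip f -> bounded_op ip f.
Proof. by case. Qed.
Lemma sa_ip {f} : selfadj ip f -> forall x y, ip (f x) y = ip x (f y).
Proof. by case. Qed.

Lemma bnd_pos {f} : bounded_op ip f ->
  exists M, 0 <= M /\ forall x, hnorm ip (f x) <= M * hnorm ip x.
Proof.
case=> _ [M hM]; exists `|M|; split => // x.
apply: le_trans (hM x) _; apply: ler_wpM2r; [exact: hnorm_ge0 | exact: ler_norm].
Qed.

Lemma bnd_comp {f g} : bounded_op ip f -> bounded_op ip g ->
  bounded_op ip (fun x => f (g x)).
Proof.
move=> hf hg; split.
  by move=> a x y; rewrite (bnd_lin hg) (bnd_lin hf).
have [Mf [Mf0 hMf]] := bnd_pos hf; have [Mg [Mg0 hMg]] := bnd_pos hg.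
exists (Mf * Mg) => x; apply: le_trans (hMf _) _.
by rewrite -mulrA; apply: ler_wpM2l.
Qed.

Lemma bnd_sub {f g} : bounded_op ip f -> bounded_op ip g ->
  bounded_op ip (fun x => f x - g x).
Proof.
move=> hf hg; split.
  move=> a x y; rewrite (bnd_lin hg) (bnd_lin hf) scalerBr.
  by rewrite opprD !addrA; congr (_ - _); rewrite -!addrA; congr (_ + _); rewrite addrC.
have [Mf [Mf0 hMf]] := bnd_pos hf; have [Mg [Mg0 hMg]] := bnd_pos hg.
exists (Mf + Mg) => x; apply: le_trans (hnorm_triangle _ _) _.
by rewrite hnormN mulrDl; apply: lerD.
Qed.

Lemma sa_sub {f g} : selfadj ip f -> selfadj ip g -> selfadj ip (fun x => f x - g x).
Proof.
move=> hf hg; split; first exact: bnd_sub (sa_bnd hf) (sa_bnd hg).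
by move=> x y; rewrite ipBl ipBr !sa_ip.
Qed.

Lemma sa_comp {f g} : selfadj ip f -> selfadj ip g -> (forall x, f (g x) = g (f x)) ->
  selfadj ip (fun x => f (g x)).
Proof.
move=> hf hg hc; split; first exact: bnd_comp (sa_bnd hf) (sa_bnd hg).
by move=> x y; rewrite (sa_ip hf) (sa_ip hg) hc.
Qed.

Lemma kernel_closed {f y} : bounded_op ip f ->
  (forall e : R, 0 < e -> exists k, f k = 0 /\ hnorm ip (y - k) < e) -> f y = 0.
Proof.
move=> hf hk; have [M [M0 hM]] := bnd_pos hf.
apply: hnorm_eq0.
have [//|hne] := eqVneq (hnorm ip (f y)) 0.
have hpos : 0 < hnorm ip (f y) by rewrite lt0r hne hnorm_ge0.
have e0 : 0 < hnorm ip (f y) / (M + 1) by rewrite divr_gt0 //; lra.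
have [k [fk hyk]] := hk _ e0.
have M1 : 0 < M + 1 by lra.
rewrite ltr_pdivlMr // in hyk.
have h1 : f y = f (y - k) by rewrite (linB (bnd_lin hf)) fk subr0.
have h2 := hM (y - k).
rewrite -h1 in h2.
have t0 := hnorm_ge0 (y - k).
move: h2 hyk t0; move: (hnorm ip (y - k)) (hnorm ip (f y)) hpos => t h hpos h2 hyk t0.
nra.
Qed.

End Ops.

Section ClosedSub.
Variable S : V -> Prop.
Hypothesis hS : closed_sub S.

Lemma S0 : S 0. Proof. by case: hS. Qed.
Lemma SL a {x y} : S x -> S y -> S (a *: x + y). Proof. by case: hS => _ h _; exact: h. Qed.
Lemma Sclo y : (forall e : R, 0 < e -> exists s, S s /\ hnorm ip (y - s) < e) -> S y.
Proof. by case: hS => _ _ h; exact: h. Qed.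
Lemma SD x y : S x -> S y -> S (x + y).
Proof. by move=> hx hy; have := SL 1 hx hy; rewrite scale1r. Qed.
Lemma SZ a x : S x -> S (a *: x).
Proof. by move=> hx; have := SL a hx S0; rewrite addr0. Qed.
Lemma SN x : S x -> S (- x).
Proof. by move=> hx; rewrite -scaleN1r; apply: SZ. Qed.
Lemma SB x y : S x -> S y -> S (x - y).
Proof. by move=> hx hy; apply: SD => //; apply: SN. Qed.


Lemma proj_point x : exists p, S p /\ forall s, S s -> ip (x - p) s = 0.
Proof.
pose E : set R := fun r => exists s, S s /\ r = q (x - s).
have hinf : has_inf E.
  split; first by exists (q (x - 0)); exists 0; split => //; exact: S0.
  by exists 0 => r [s [_ ->]]; exact: q_ge0.
set d := inf E.
have dle : forall s, S s -> d <= q (x - s).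
  by move=> s Ss; apply: (ge_inf (proj2 hinf)); exists s.
have d0 : 0 <= d.
  by apply: lb_le_inf (proj1 hinf) _ => r [s [_ ->]]; exact: q_ge0.
have hu : forall n : nat, exists s, S s /\ q (x - s) < d + (n.+1%:R)^-1.
  move=> n; have e0 : 0 < (n.+1%:R : R)^-1 by rewrite invr_gt0 ltr0Sn.
  by have [r [s [Ss ->]] hr] := inf_adherent e0 hinf; exists s.
pose u n := proj1_sig (constructive_indefinite_description _ (hu n)).
have uS n : S (u n).
  by rewrite /u; case: constructive_indefinite_description => /= s [].
have ub n : q (x - u n) < d + (n.+1%:R)^-1.
  by rewrite /u; case: constructive_indefinite_description => /= s [].
have cb : forall m n, q (u m - u n) <= 2 * (m.+1%:R)^-1 + 2 * (n.+1%:R)^-1.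
  move=> m n.
  pose mid := (2^-1 : R)%:C *: (u m + u n).
  have Smid : S mid by apply: SZ; apply: SD.
  have hd := dle _ Smid.
  have e1 : (x - u m) + (x - u n) = (2 : R)%:C *: (x - mid).
    rewrite /mid scalerBr scalerA -rmorphM divff ?pnatr_eq0 // scale1r.
    have h2 : ((2:R)%:C : R[i]) = 1 + 1 by apply/eqP; rewrite eq_complex /= addr0 !eqxx.
    rewrite h2 scalerDl scale1r.
    by rewrite opprD !addrA; congr (_ - _); rewrite -!addrA; congr (_ + _); rewrite addrC.
  have e2 : (x - u m) - (x - u n) = - (u m - u n).
    by rewrite opprD opprK addrACA subrr add0r opprB addrC.
  have par := parallelogram (x - u m) (x - u n).
  rewrite e1 e2 qZ qN in par.
  have := ub m; have := ub n.
  have h4 : (2:R) ^+ 2 = 4 by rewrite expr2; lra.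
  rewrite h4 in par.
  move=> h1 h2; clearbody d mid.
  move: h1 h2; rewrite !mulr_natl.
  move: (m.+1%:R^-1 : R) (n.+1%:R^-1 : R) => a b h1 h2.
  lra.
have cauchy : forall e : R, 0 < e -> exists N : nat, forall m n : nat,
      (N <= m)%N -> (N <= n)%N -> hnorm ip (u m - u n) < e.
  move=> e e0.
  have e20 : 0 < e ^+ 2 / 4 by rewrite divr_gt0 // exprn_gt0.
  have [N hN] := invn_small _ e20.
  exists N => m n hm hn; rewrite hnorm_lt //.
  apply: le_lt_trans (cb m n) _.
  have h1 := hN _ hm; have h2 := hN _ hn.
  move: h1 h2; move: (m.+1%:R^-1 : R) (n.+1%:R^-1 : R) => a b h1 h2; lra.
have [l hl] := complete _ cauchy.
have Sl : S l.
  apply: Sclo => e e0; have [N hN] := hl e e0; exists (u N); split => //.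
  by rewrite -hnormN opprB; apply: hN.
have qle : q (x - l) <= d.
  apply/ler_addgt0Pr => eta eta0.
  set K := Num.sqrt (d + 1).
  have K0 : 0 <= K by exact: sqrtr_ge0.
  have t0 : 0 < Num.min 1 (eta / (4 * (2 * K + 1))).
    by rewrite lt_min ltr01 /= divr_gt0 // mulr_gt0 //; lra.
  have [N1 hN1] := hl _ t0.
  have eta2 : 0 < eta / 2 by rewrite divr_gt0.
  have [N2 hN2] := invn_small _ eta2.
  set n := maxn N1 N2.
  have h1 := hN1 n (leq_maxl _ _).
  have h2 := hN2 n (leq_maxr _ _).
  have h3 := ub n.
  set t := hnorm ip (u n - l).
  have tt : t < 1 /\ t < eta / (4 * (2 * K + 1)) by move: h1; rewrite lt_min => /andP.
  have tge : 0 <= t by exact: hnorm_ge0.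
  have hK : hnorm ip (x - u n) <= K.
    have hinv : (n.+1%:R : R)^-1 <= 1 by rewrite invf_le1 ?ltr0Sn // ler1n.
    rewrite hnormE ler_sqrt; last lra.
    move: hinv h3; move: (n.+1%:R^-1 : R) => a; lra.
  have hR := Re_ip_le (x - u n) (u n - l).
  have hx : x - l = (x - u n) + (u n - l) by rewrite addrA addrNK.
  have hq : q (u n - l) = t ^+ 2 by rewrite sqr_hnorm.
  have hxn0 := hnorm_ge0 (x - u n).
  have hprod : hnorm ip (x - u n) * t <= K * t by apply: ler_wpM2r.
  have hkt : t * (4 * (2 * K + 1)) < eta.
    have pos : 0 < 4 * (2 * K + 1) by lra.
    by rewrite -ltr_pdivlMr //; case: tt.
  rewrite hx qD hq.
  have : t ^+ 2 <= t by rewrite expr2 ler_piMl //; case: tt => ? _; lra.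
  case: tt => _ tt2 hsq.
  move: h2 h3; move: (n.+1%:R^-1 : R) => a h2 h3.
  have he : eta / 2 + eta / 2 = eta by rewrite -splitr.
  move: he h2 hkt; move: (eta / 2) => e2 he h2 hkt.
  rewrite -/t in hR; nra.
have orth : forall s, S s -> ip (x - l) s = 0.
  move=> s Ss.
  set r := x - l; set c := ip r s.
  set sg := (q s + 1)^-1.
  have qs0 := q_ge0 s.
  have sg0 : 0 < sg by rewrite invr_gt0; lra.
  have sgq : sg * (q s + 1) = 1 by rewrite mulVf //; lra.
  set lam := sg%:C * c.
  have Sls : S (l + lam *: s) by apply: SD => //; apply: SZ.
  have hd := dle _ Sls.
  have e3 : x - (l + lam *: s) = r - lam *: s by rewrite opprD addrA.
  move: hd; rewrite e3 qD qN qZc ReipN ipZr -/c.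
  have qle' : q r <= d by [].
  rewrite /lam; clear Sls e3 lam; clearbody c; case: c => a b /= hd.
  have hn : 0 <= a ^+ 2 + b ^+ 2 by rewrite addr_ge0 // sqr_ge0.
  have : a ^+ 2 + b ^+ 2 <= 0.
    have h2 : sg * q s = 1 - sg by rewrite mulrDr mulr1 in sgq; lra.
    have h1 : 0 <= sg * (sg * q s) * (a ^+ 2 + b ^+ 2) - 2 * sg * (a ^+ 2 + b ^+ 2).
      move: hd qle'; rewrite !mul0r subr0 addr0 mulNr opprK.
      move=> hd qle'.
      have e4 : (sg * a) ^+ 2 + (sg * b) ^+ 2 = sg * sg * (a ^+ 2 + b ^+ 2) by ring.
      rewrite e4 in hd; nra.
    rewrite h2 in h1.
    rewrite leNgt; apply/negP => npos.
    have : 0 < sg * (1 + sg) * (a ^+ 2 + b ^+ 2) by rewrite !mulr_gt0 //; lra.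
    nra.
  move=> hle.
  have ha : a = 0 by apply/eqP; rewrite -sqrf_eq0 eq_le sqr_ge0 andbT; nra.
  have hb : b = 0 by apply/eqP; rewrite -sqrf_eq0 eq_le sqr_ge0 andbT; nra.
  by rewrite ha hb.
by exists l; split.
Qed.

Definition projS x := proj1_sig (constructive_indefinite_description _ (proj_point x)).
Lemma projS_in x : S (projS x).
Proof. by rewrite /projS; case: constructive_indefinite_description => /= p []. Qed.
Lemma projS_orth x s : S s -> ip (x - projS x) s = 0.
Proof. by rewrite /projS; case: constructive_indefinite_description => /= p [_ h]; exact: h. Qed.
Lemma projS_ip x s : S s -> ip x s = ip (projS x) s.
Proof. by move=> Ss; apply/eqP; rewrite -subr_eq0 -ipBl projS_orth. Qed.

Lemma projS_id s : S s -> projS s = s.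
Proof.
move=> Ss; apply/eqP; rewrite eq_sym -subr_eq0; apply/eqP/ipD.
by apply: projS_orth; apply: SB => //; exact: projS_in.
Qed.

Lemma projS_kill v : (forall s, S s -> ip v s = 0) -> projS v = 0.
Proof.
move=> h; apply: ipD; rewrite -projS_ip; first exact: h (projS_in v).
exact: projS_in.
Qed.

Lemma projS_lin a x y : projS (a *: x + y) = a *: projS x + projS y.
Proof.
set w := projS (a *: x + y) - (a *: projS x + projS y).
have Sw : S w by apply: SB; [exact: projS_in | apply: SL; exact: projS_in].
have h : forall s, S s -> ip w s = 0.
  move=> s Ss; rewrite /w ipBl ipL -!projS_ip // ipL; exact: subrr.
apply/eqP; rewrite -subr_eq0; apply/eqP/ipD; exact: h.
Qed.

Lemma projS_sa x y : ip (projS x) y = ip x (projS y).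
Proof.
have e1 : ip (projS x) y = ip (projS x) (projS y).
  apply/eqP; rewrite -subr_eq0 -ipBr ipC projS_orth ?conjc0 //; exact: projS_in.
by rewrite e1 -projS_ip //; exact: projS_in.
Qed.

Lemma projS_q x : q (projS x) <= q x.
Proof.
have ex : x = projS x + (x - projS x) by rewrite addrC subrK.
have h0 : ip (projS x) (x - projS x) = 0.
  by rewrite ipC projS_orth ?conjc0 //; exact: projS_in.
rewrite [X in _ <= q X]ex qD h0 Re0 mulr0 addr0; have := q_ge0 (x - projS x); lra.
Qed.

Lemma projS_idem x : projS (projS x) = projS x.
Proof. by apply: projS_id; exact: projS_in. Qed.

Lemma projS_sa' : selfadj ip projS.
Proof.
split; last exact: projS_sa.
split; first exact: projS_lin.
exists 1 => x; rewrite mul1r !hnormE ler_sqrt ?q_ge0 //; exact: projS_q.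
Qed.

Lemma projS_comm T : selfadj ip T -> (forall x, S x -> S (T x)) ->
  forall x, T (projS x) = projS (T x).
Proof.
move=> hT hTS x.
have lT := sa_lin hT.
have ex : T x = T (projS x) + T (x - projS x) by rewrite -linD // addrC subrK.
have hs : S (T (projS x)) by apply: hTS; exact: projS_in.
have hk : projS (T (x - projS x)) = 0.
  apply: projS_kill => s Ss.
  by rewrite (sa_ip hT) projS_orth //; apply: hTS.
by rewrite ex (linD projS_lin) (projS_id _ hs) hk addr0.
Qed.

End ClosedSub.

Lemma logle_proj T Q : selfadj ip T -> selfadj ip Q -> (forall x, Q (Q x) = Q x) ->
  (forall x, T (Q x) = Q (T x)) -> logle ip (fun x => T (Q x)) T.
Proof.
move=> hT hQ hQQ hc.
have lT := sa_lin hT; have lQ := sa_lin hQ.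
exists (fun x => T x - T (Q x)); split.
- exact: sa_sub hT (sa_comp hT hQ hc).
- by move=> x; rewrite addrC subrK.
- by move=> x; rewrite (linB lQ) -hc -(hc (Q x)) hQQ subrr (lin0 lT).
Qed.

Lemma logle_facts C T : selfadj ip C -> logle ip C T ->
  (forall z, T (C z) = C (C z)) /\ (forall x, C (T x) = C (C x)).
Proof.
move=> hC [D [hD hTD hCD]].
have DC : forall z, D (C z) = 0.
  move=> z; apply: ip_eq0 => w; by rewrite (sa_ip hD) (sa_ip hC) hCD ip0r.
split => [z|x]; first by rewrite hTD DC addr0.
by rewrite hTD (linD (sa_lin hC)) hCD addr0.
Qed.

Lemma hnormZ (a : R[i]) v :
  hnorm ip (a *: v) = Num.sqrt (complex.Re a ^+ 2 + complex.Im a ^+ 2) * hnorm ip v.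
Proof. by rewrite !hnormE qZc sqrtrM // addr_ge0 // sqr_ge0. Qed.

Lemma rearr (u v w z : V) : u + v - (w + z) = (u - w) + (v - z).
Proof. by rewrite opprD addrACA. Qed.

Lemma main_thm (A B : V -> V) (hA : selfadj ip A) (hB : selfadj ip B) :
  exists M : V -> V,
    (exists C0 : V -> V, [/\ selfadj ip C0, logle ip C0 A, logle ip C0 B
                           & is_range_proj ip C0 M]) /\
    (forall C P : V -> V, selfadj ip C -> logle ip C A -> logle ip C B ->
       is_range_proj ip C P -> proj_le P M) /\
    is_logmeet ip A B (fun x => B (M x)).
Proof.
have lA := sa_lin hA; have lB := sa_lin hB.
pose K := fun x => forall n, A (iter n A x) = B (iter n A x).
have iterlin : forall n, lin (iter n A).
  elim=> [|n IH] a x y /=; first by [].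
  by rewrite IH lA.
have iterbnd : forall n, bounded_op ip (iter n A).
  elim=> [|n IH].
    split; first by [].
    by exists 1 => x; rewrite mul1r.
  exact: (bnd_comp (sa_bnd hA) IH).
have Kc : closed_sub K.
  split.
  - by move=> n; rewrite (lin0 (iterlin n)) (lin0 lA) (lin0 lB).
  - move=> a x y hx hy n.
    by rewrite (iterlin n) lA lB hx hy.
  - move=> y hy n; apply/eqP; rewrite -subr_eq0; apply/eqP.
    pose f := fun x => A (iter n A x) - B (iter n A x).
    have hf : bounded_op ip f.
      exact: bnd_sub (bnd_comp (sa_bnd hA) (iterbnd n)) (bnd_comp (sa_bnd hB) (iterbnd n)).
    apply: (kernel_closed hf) => e e0.
    have [k [hk hyk]] := hy e e0; exists k; split => //.
    by rewrite /f hk subrr.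
have KA : forall x, K x -> K (A x).
  by move=> x hx n; rewrite -iterSr; exact: hx n.+1.
have KAB : forall x, K x -> A x = B x by move=> x hx; exact: hx 0%N.
have KB : forall x, K x -> K (B x) by move=> x hx; rewrite -KAB //; exact: KA.
pose P := projS K Kc.
have PK : forall x, K (P x) by move=> x; exact: projS_in.
have saP : selfadj ip P := projS_sa' K Kc.
have lP := sa_lin saP.
have PP : forall x, P (P x) = P x by move=> x; exact: projS_idem.
have comA : forall x, A (P x) = P (A x) := projS_comm K Kc _ hA KA.
have comB : forall x, B (P x) = P (B x) := projS_comm K Kc _ hB KB.
pose C0 := fun x => A (P x).
have C0B : forall x, C0 x = B (P x) by move=> x; rewrite /C0 KAB.
have C0K : forall x, K (C0 x) by move=> x; apply: KA.
have saC0 : selfadj ip C0 := sa_comp hA saP comA.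
have lC0 := sa_lin saC0.
have leA : logle ip C0 A := logle_proj _ _ hA saP PP comA.
have leB : logle ip C0 B.
  have -> : C0 = (fun x => B (P x)) by apply: functional_extensionality => x; exact: C0B.
  exact: logle_proj _ _ hB saP PP comB.
pose Scl := in_closure_range ip C0.
have Sc : closed_sub Scl.
  split.
  - move=> e e0; exists 0; by rewrite (lin0 lC0) subrr hnorm0.
  - move=> a y1 y2 h1 h2 e e0.
    set na := Num.sqrt (complex.Re a ^+ 2 + complex.Im a ^+ 2).
    have na0 : 0 <= na by exact: sqrtr_ge0.
    have e1 : 0 < e / (2 * (na + 1)) by rewrite divr_gt0 // mulr_gt0 //; lra.
    have e2 : 0 < e / 2 by rewrite divr_gt0.
    have [x1 hx1] := h1 _ e1; have [x2 hx2] := h2 _ e2.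
    exists (a *: x1 + x2).
    rewrite lC0 rearr -scalerBr.
    apply: le_lt_trans (hnorm_triangle _ _) _.
    rewrite hnormZ -/na.
    have pos : 0 < 2 * (na + 1) by lra.
    rewrite ltr_pdivlMr // in hx1.
    move: hx1 hx2 (hnorm_ge0 (y1 - C0 x1)).
    move: (hnorm ip (y1 - C0 x1)) (hnorm ip (y2 - C0 x2)) => t1 t2 hx1 hx2 t10.
    have he : e / 2 + e / 2 = e by rewrite -splitr.
    move: he hx2; move: (e / 2) => e' he hx2.
    nra.
  - move=> y hy e e0.
    have e2 : 0 < e / 2 by rewrite divr_gt0.
    have [s [hs hys]] := hy _ e2.
    have [x hx] := hs _ e2.
    exists x.
    have -> : y - C0 x = (y - s) + (s - C0 x) by rewrite addrA subrK.
    apply: le_lt_trans (hnorm_triangle _ _) _.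
    have he : e / 2 + e / 2 = e by rewrite -splitr.
    move: he hys hx; move: (e / 2) => e' he h1 h2; lra.
pose M := projS Scl Sc.
have saM : selfadj ip M := projS_sa' Scl Sc.
have MM : forall x, M (M x) = M x by move=> x; exact: projS_idem.
have SclC0 : forall w, Scl (C0 w).
  by move=> w e e0; exists w; rewrite subrr hnorm0.
have SclK : forall y, Scl y -> K y.
  move=> y hy; apply: (Sclo _ Kc) => e e0.
  have [x hx] := hy e e0; exists (C0 x); split => //.
have rpM : is_range_proj ip C0 M.
  split => // y; split.
  - by move=> [x ->]; exact: projS_in.
  - by move=> hy; exists y; rewrite /M projS_id.
have C0M : forall x, C0 (M x) = C0 x.
  move=> x; apply/eqP; rewrite eq_sym -subr_eq0 -(linB lC0); apply/eqP.
  apply: ip_eq0 => w; rewrite (sa_ip saC0).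
  exact: (projS_orth Scl Sc x (C0 w) (SclC0 w)).
have BM : (fun x => B (M x)) = C0.
  apply: functional_extensionality => x.
  have hK : K (M x) by apply: SclK; exact: projS_in.
  by rewrite -[M x](projS_id K Kc _ hK) -/P -C0B C0M.
have ranK : forall Y, selfadj ip Y -> logle ip Y A -> logle ip Y B -> forall z, K (Y z).
  move=> Y hY hYA hYB z.
  have [fA _] := logle_facts _ _ hY hYA.
  have [fB _] := logle_facts _ _ hY hYB.
  have it : forall n, iter n A (Y z) = Y (iter n Y z).
    elim=> [|n IH] //=.
    by rewrite IH fA.
  by move=> n; rewrite it fA fB.
exists M; split; first by exists C0.
split.
- move=> C P' hC hCA hCB [saP' P'P' rP'].
  have KC := ranK C hC hCA hCB.
  have [fA gA] := logle_facts _ _ hC hCA.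
  have lC := sa_lin hC.
  have lP' := sa_lin saP'.
  have clP' : forall x, in_closure_range ip C (P' x) by move=> x; apply/rP'; exists x.
  have KP' : forall x, K (P' x).
    move=> x; apply: (Sclo _ Kc) => e e0.
    have [z hz] := clP' x e e0; exists (C z); split => //.
  case: hCA => D1 [hD1 hAD1 hCD1].
  have D1C : forall z, D1 (C z) = 0.
    move=> z; apply: ip_eq0 => w; by rewrite (sa_ip hD1) (sa_ip hC) hCD1 ip0r.
  have D1P' : forall x, D1 (P' x) = 0.
    move=> x; apply: (kernel_closed (sa_bnd hD1)) => e e0.
    have [z hz] := clP' x e e0; exists (C z); split => //.
  have CP' : forall z, C (P' z) = C z.
    move=> z; apply/eqP; rewrite eq_sym -subr_eq0 -(linB lC); apply/eqP.
    apply: ip_eq0 => w; rewrite (sa_ip hC).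
    have [v hv] : exists v, C w = P' v by apply/rP' => e e0; exists w; rewrite subrr hnorm0.
    by rewrite hv -(sa_ip saP') (linB lP') P'P' subrr ip0l.
  have CC0 : forall z, C z = C0 (P' z).
    move=> z; rewrite /C0 /P (projS_id K Kc _ (KP' z)).
    by rewrite hAD1 D1P' addr0 CP'.
  have MP' : forall x, M (P' x) = P' x.
    move=> x; apply: projS_id => e e0.
    have [z hz] := clP' x e e0; exists (P' z); by rewrite -CC0.
  move=> x; apply: ip_eq => w.
  by rewrite (sa_ip saP') (sa_ip saM) MP' (sa_ip saP').
- rewrite BM; split => //.
  move=> Y hY hYA hYB.
  have KY := ranK Y hY hYA hYB.
  have [_ gA] := logle_facts _ _ hY hYA.
  have lY := sa_lin hY.
  have YP : forall x, Y (P x) = Y x.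
    move=> x; apply: ip_eq => w.
    by rewrite (sa_ip hY) (sa_ip saP) /P (projS_id K Kc _ (KY w)) (sa_ip hY).
  exists (fun x => C0 x - Y x); split.
  + exact: sa_sub saC0 hY.
  + by move=> x; rewrite addrC subrK.
  + by move=> x; rewrite (linB lY) /C0 comA YP gA subrr.
Qed.

End Basics.

Theorem corollary4 (R : realType) (V : lmodType R[i]) (ip : V -> V -> R[i])
  (hH : is_hilbert ip) (A B : V -> V) (hA : selfadj ip A) (hB : selfadj ip B) :
  exists M : V -> V,
    (* M belongs to the set { P_C : C in S(H), C <= A, C <= B } *)
    (exists C0 : V -> V, [/\ selfadj ip C0, logle ip C0 A, logle ip C0 B
                           & is_range_proj ip C0 M]) /\
    (* M is above every element of that set *)
    (forall C P : V -> V, selfadj ip C -> logle ip C A -> logle ip C B ->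
       is_range_proj ip C P -> proj_le P M) /\
    (* the meet of A and B exists and equals B M *)
    is_logmeet ip A B (fun x => B (M x)).
Proof.
exact: (@main_thm R V ip hH A B hA hB).
Qed.
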